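(* Consider the complex-valued protocol. Let $\mathcal F$ be a Banach function space compactly and densely embedded in $C(\mathbf X)$, and let $M>0$ be such that $L:=\limsup_{\epsilon\to0}\mathcal H_\epsilon(U_{\mathcal F})/\log^M(1/\epsilon)\in(0,\infty)$. There exists a strategy for Predictor such that for every $F\in C(\mathbf X)$ there is $N_0$ (depending on $F$ but not on Reality's moves) such that for all $N\ge N_0$ and all moves of Reality $$\sum_{n=1}^N|y_n-\mu_n|^2\le\sum_{n=1}^N|y_n-F(x_n)|^2+C_M\inf_{\epsilon\in(0,1]}\left(L\left(\log^+\mathcal A^{\mathcal F}_\epsilon(F)\right)^M+L\log^M\frac1\epsilon+\epsilon N\right),$$ where $C_M$ is a constant depending only on $M$.
   Context: Complex-valued protocol: $\mathbf X$ a nonempty topological space; at each round $n$ Reality announces $x_n\in\mathbf X$, Predictor announces $\mu_n\in\mathbb C$, Reality announces $y_n\in\mathbb C$ with $|y_n|\le1$; a strategy for Predictor maps each history to $\mu_n$. $C(\mathbf X)$: bounded continuous complex-valued functions with the supremum norm. A Banach function space compactly and densely embedded in $C(\mathbf X)$: a linear subspace $\mathcal F\subseteq C(\mathbf X)$, dense in $C(\mathbf X)$ for the supremum norm, with a norm $\|\cdot\|_{\mathcal F}$ making it a Banach space whose unit ball $U_{\mathcal F}$ is compact in $C(\mathbf X)$. Approachability: $\mathcal A^{\mathcal F}_\epsilon(F):=\inf\{\|F^*\|_{\mathcal F}:F^*\in\mathcal F,\ \|F-F^*\|_{C(\mathbf X)}\le\epsilon\}$. $\mathcal H_\epsilon(A)$: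 $\log_2$ of the minimal size of an $\epsilon$-net of $A$ consisting of points of $A$. $\log=\log_2$; $\log^+t=\log t$ if $t\ge1$, else $0$. *)

(* Defs.v *)
From Stdlib Require Import Reals List.
From Coquelicot Require Import Coquelicot.
Open Scope R_scope.

Record topology (X : Type) := Topology {
  is_open : (X -> Prop) -> Prop;
  open_full : is_open (fun _ => True);
  open_inter : forall U V, is_open U -> is_open V -> is_open (fun x => U x /\ V x);
  open_union : forall (I : Type) (U : I -> X -> Prop),
      (forall i, is_open (U i)) -> is_open (fun x => exists i, U i x)
}.
Arguments is_open {X} _ _.

Definition continuous_top {X} (T : topology X) (F : X -> C) : Prop :=
  forall V : C -> Prop, open V -> is_open T (fun x => V (F x)).

Definition CX {X} (T : topology X) (F : X -> C) : Prop :=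
  continuous_top T F /\ exists B : R, forall x, Cmod (F x) <= B.

Definition supnorm {X} (F : X -> C) : R :=
  real (Lub_Rbar (fun r => exists x, r = Cmod (F x))).

Definition fadd {X} (f g : X -> C) : X -> C := fun x => Cplus (f x) (g x).
Definition fsub {X} (f g : X -> C) : X -> C := fun x => Cminus (f x) (g x).
Definition fscal {X} (c : C) (f : X -> C) : X -> C := fun x => Cmult c (f x).
Definition fzero {X} : X -> C := fun _ => RtoC 0.

Definition sup_open {X} (T : topology X) (O : (X -> C) -> Prop) : Prop :=
  forall f, O f -> exists r, 0 < r /\
    forall g, CX T g -> supnorm (fsub f g) < r -> O g.

Definition compact_CX {X} (T : topology X) (A : (X -> C) -> Prop) : Prop :=
  (forall f, A f -> CX T f) /\
  forall (I : Type) (U : I -> (X -> C) -> Prop),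
    (forall i, sup_open T (U i)) ->
    (forall a, A a -> exists i, U i a) ->
    exists l : list I, forall a, A a -> exists i, In i l /\ U i a.

Definition unit_ball {X} (Fsp : (X -> C) -> Prop) (nF : (X -> C) -> R) :=
  fun f => Fsp f /\ nF f <= 1.

Definition banach_cd_embedded {X} (T : topology X)
    (Fsp : (X -> C) -> Prop) (nF : (X -> C) -> R) : Prop :=
  (forall f, Fsp f -> CX T f) /\
  Fsp fzero /\
  (forall f g, Fsp f -> Fsp g -> Fsp (fadd f g)) /\
  (forall c f, Fsp f -> Fsp (fscal c f)) /\
  (forall f, Fsp f -> 0 <= nF f) /\
  (forall f, Fsp f -> nF f = 0 -> forall x, f x = RtoC 0) /\
  (forall c f, Fsp f -> nF (fscal c f) = Cmod c * nF f) /\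
  (forall f g, Fsp f -> Fsp g -> nF (fadd f g) <= nF f + nF g) /\
  (forall u : nat -> X -> C, (forall n, Fsp (u n)) ->
     (forall e, 0 < e -> exists N, forall m n, (N <= m)%nat -> (N <= n)%nat ->
                 nF (fsub (u m) (u n)) < e) ->
     exists g, Fsp g /\ forall e, 0 < e -> exists N, forall n, (N <= n)%nat ->
                 nF (fsub (u n) g) < e) /\
  (forall G, CX T G -> forall e, 0 < e -> exists f, Fsp f /\ supnorm (fsub G f) < e) /\
  compact_CX T (unit_ball Fsp nF).

Definition log2 (t : R) : R := ln t / ln 2.
Definition logp (t : R) : R := if Rle_dec 1 t then log2 t else 0.
(** real power with the convention 0^M = 0 (only applied to nonnegative bases) *)
Definition rpow (t M : R) : R := if Rlt_dec 0 t then Rpower t M else 0.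

Definition has_net {X} (A : (X -> C) -> Prop) (eps : R) (n : nat) : Prop :=
  exists l : list (X -> C), length l = n /\ (forall s, In s l -> A s) /\
    forall a, A a -> exists s, In s l /\ supnorm (fsub a s) <= eps.

Definition Hent {X} (A : (X -> C) -> Prop) (eps : R) : Rbar :=
  Glb_Rbar (fun r => exists n, has_net A eps n /\ r = log2 (INR n)).

Definition limsup0_is (g : R -> Rbar) (L : R) : Prop :=
  (forall e, 0 < e -> exists d, 0 < d /\ forall eps, 0 < eps < d ->
      Rbar_le (g eps) (Finite (L + e))) /\
  (forall e, 0 < e -> forall d, 0 < d -> exists eps, 0 < eps < d /\
      Rbar_le (Finite (L - e)) (g eps)).

Definition approach {X} (T : topology X) (Fsp : (X -> C) -> Prop) (nF : (X -> C) -> R)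
    (eps : R) (F : X -> C) : R :=
  real (Glb_Rbar (fun r => exists Fs, Fsp Fs /\ supnorm (fsub F Fs) <= eps /\ r = nF Fs)).

(** Predictor strategies: the history is the list of past pairs (x_i, y_i)
    together with the current x_n *)
Definition strategy (X : Type) := list (X * C) -> X -> C.

Definition history {X} (x : nat -> X) (y : nat -> C) (n : nat) : list (X * C) :=
  map (fun i => (x i, y i)) (seq 0 n).

Definition pred_move {X} (S : strategy X) (x : nat -> X) (y : nat -> C) (n : nat) : C :=
  S (history x y n) (x n).

(** sum_{i=0}^{N-1} f i  (rounds n = 1..N are indexed 0..N-1) *)
Definition sumN (f : nat -> R) (N : nat) : R :=
  fold_right Rplus 0 (map f (seq 0 N)).

(* Main.v *)
Require Import Defs.
From Stdlib Require Import Reals List.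
From Coquelicot Require Import Coquelicot.
From Stdlib Require Import ZArith Lra Lia Psatz Classical ClassicalEpsilon.
Open Scope R_scope.

Definition lsum {I} (l : list I) (f : I -> R) : R := fold_right Rplus 0 (map f l).

Lemma lsum_nil {I} (f : I -> R) : lsum nil f = 0.
Proof. reflexivity. Qed.
Lemma lsum_cons {I} (a : I) l f : lsum (a :: l) f = f a + lsum l f.
Proof. reflexivity. Qed.
Lemma lsum_app {I} (l1 l2 : list I) f : lsum (l1 ++ l2) f = lsum l1 f + lsum l2 f.
Proof. induction l1; simpl; unfold lsum in *; simpl; [lra|]. rewrite IHl1; lra. Qed.
Lemma lsum_ext {I} (l : list I) f g : (forall x, In x l -> f x = g x) -> lsum l f = lsum l g.
Proof. induction l; intros H; [reflexivity|]. rewrite !lsum_cons, H, IHl; auto.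
  intros; apply H; simpl; auto. simpl; auto. Qed.
Lemma lsum_le {I} (l : list I) f g : (forall x, In x l -> f x <= g x) -> lsum l f <= lsum l g.
Proof. induction l; intros H; [unfold lsum; simpl; lra|]. rewrite !lsum_cons.
  assert (f a <= g a) by (apply H; simpl; auto).
  assert (lsum l f <= lsum l g) by (apply IHl; intros; apply H; simpl; auto). lra. Qed.
Lemma lsum_nonneg {I} (l : list I) f : (forall x, In x l -> 0 <= f x) -> 0 <= lsum l f.
Proof. induction l; intros H; [unfold lsum; simpl; lra|]. rewrite lsum_cons.
  assert (0 <= f a) by (apply H; simpl; auto).
  assert (0 <= lsum l f) by (apply IHl; intros; apply H; simpl; auto). lra. Qed.
Lemma lsum_zero {I} (l : list I) f : (forall x, In x l -> f x = 0) -> lsum l f = 0.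
Proof. induction l; intros H; auto. rewrite lsum_cons, IHl.
  - rewrite (H a); [lra | simpl; auto].
  - intros; apply H; simpl; auto. Qed.
Lemma lsum_plus {I} (l : list I) f g : lsum l (fun x => f x + g x) = lsum l f + lsum l g.
Proof. induction l; [unfold lsum; simpl; lra|]. rewrite !lsum_cons, IHl; lra. Qed.
Lemma lsum_scal {I} (l : list I) c f : lsum l (fun x => c * f x) = c * lsum l f.
Proof. induction l; [unfold lsum; simpl; lra|]. rewrite !lsum_cons, IHl; lra. Qed.
Lemma lsum_const {I} (l : list I) c : lsum l (fun _ => c) = INR (length l) * c.
Proof. induction l; [unfold lsum; simpl; lra|]. rewrite lsum_cons, IHl. simpl length. rewrite S_INR; lra. Qed.
Lemma lsum_in_le {I} (l : list I) f p : (forall x, In x l -> 0 <= f x) -> In p l -> f p <= lsum l f.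
Proof. induction l; intros H Hp; [destruct Hp|]. rewrite lsum_cons. destruct Hp as [<-|Hp].
  - assert (0 <= lsum l f) by (apply lsum_nonneg; intros; apply H; simpl; auto). lra.
  - assert (0 <= f a) by (apply H; simpl; auto). assert (f p <= lsum l f) by (apply IHl; auto; intros; apply H; simpl; auto). lra. Qed.
Lemma lsum_map {I J} (l : list I) (k : I -> J) f : lsum (map k l) f = lsum l (fun x => f (k x)).
Proof. induction l; auto. simpl map. rewrite !lsum_cons, IHl; auto. Qed.
Lemma lsum_flat_map {I J} (l : list I) (k : I -> list J) f :
  lsum (flat_map k l) f = lsum l (fun x => lsum (k x) f).
Proof. induction l; auto. simpl flat_map. rewrite lsum_app, lsum_cons, IHl; auto. Qed.

Lemma sumN_lsum f N : sumN f N = lsum (seq 0 N) f.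
Proof. reflexivity. Qed.
Lemma sumN_S f N : sumN f (S N) = sumN f N + f N.
Proof. rewrite !sumN_lsum, seq_S, lsum_app. simpl. unfold lsum; simpl; lra. Qed.
Lemma sumN_0 f : sumN f 0 = 0.
Proof. reflexivity. Qed.
Lemma sumN_ext f g N : (forall i, (i < N)%nat -> f i = g i) -> sumN f N = sumN g N.
Proof. intros H; rewrite !sumN_lsum; apply lsum_ext; intros x Hx; apply in_seq in Hx; apply H; lia. Qed.
Lemma sumN_le f g N : (forall i, (i < N)%nat -> f i <= g i) -> sumN f N <= sumN g N.
Proof. intros H; rewrite !sumN_lsum; apply lsum_le; intros x Hx; apply in_seq in Hx; apply H; lia. Qed.
Lemma sumN_minus f g N : sumN (fun i => f i - g i) N = sumN f N - sumN g N.
Proof. induction N; [rewrite !sumN_0; lra|]. rewrite !sumN_S, IHN; lra. Qed.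
Lemma sumN_plus f g N : sumN (fun i => f i + g i) N = sumN f N + sumN g N.
Proof. induction N; [rewrite !sumN_0; lra|]. rewrite !sumN_S, IHN; lra. Qed.
Lemma sumN_const c N : sumN (fun _ => c) N = INR N * c.
Proof. induction N; [rewrite sumN_0; simpl; lra|]. rewrite sumN_S, IHN, S_INR; lra. Qed.

Lemma sumN_count (P : nat -> bool) K N : 0 <= K -> (forall i, P i = true -> INR i < K) ->
  sumN (fun i => if P i then 1 else 0) N <= K + 1.
Proof.
  intros HK HP.
  assert (H : sumN (fun i => if P i then 1 else 0) N <= INR N /\ sumN (fun i => if P i then 1 else 0) N <= K + 1).
  { induction N. rewrite sumN_0; simpl; lra. rewrite sumN_S, S_INR. destruct IHN as [H1 H2].
    destruct (P N) eqn:E. apply HP in E. lra. lra. }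
  tauto.
Qed.

Definition sqn (z : C) : R := fst z ^ 2 + snd z ^ 2.

Lemma Cmod_sq z : Cmod z ^ 2 = sqn z.
Proof. unfold Cmod, sqn. rewrite pow2_sqrt; auto. nra. Qed.
Lemma Cmod_ge0 z : 0 <= Cmod z.
Proof. unfold Cmod; apply sqrt_pos. Qed.
Lemma Cmod_le_sqn z r : 0 <= r -> (Cmod z <= r <-> sqn z <= r ^ 2).
Proof. intros Hr. rewrite <- Cmod_sq. pose proof (Cmod_ge0 z). split; intros H1.
  - apply pow_incr; lra.
  - destruct (Rle_dec (Cmod z) r); auto. assert (r < Cmod z) by lra.
    assert (r^2 < Cmod z ^2) by nra. lra. Qed.

Definition clip (z : C) : C :=
  if Rle_dec (Cmod z) 1 then z else (fst z / Cmod z, snd z / Cmod z).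

Lemma unit_sq z : 1 < Cmod z -> (fst z / Cmod z) ^ 2 + (snd z / Cmod z) ^ 2 = 1.
Proof. intros H. pose proof (Cmod_sq z). unfold sqn in H0.
  field_simplify; [| lra]. rewrite <- H0. field. lra. Qed.

Lemma clip_norm z : Cmod (clip z) <= 1.
Proof. unfold clip. destruct (Rle_dec (Cmod z) 1); auto.
  apply Cmod_le_sqn; [lra|]. unfold sqn; cbn [fst snd]. rewrite unit_sq; lra. Qed.

Lemma U1 u1 u2 al b1 b2 : u1^2+u2^2 = 1 -> 1 <= al -> b1^2+b2^2 <= 1 ->
  (u1-b1)^2+(u2-b2)^2 <= (al*u1-b1)^2+(al*u2-b2)^2.
Proof. intros H1 H2 H3.
  pose proof (pow2_ge_0 (u1-b1)); pose proof (pow2_ge_0 (u2-b2)). assert (2*(u1*b1+u2*b2) <= 2) by nra.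
  assert (0 <= (al-1)*((al+1) - 2*(u1*b1+u2*b2))) by (apply Rmult_le_pos; lra).
  assert (E1 : (al*u1-b1)^2+(al*u2-b2)^2 = al^2*(u1^2+u2^2) + (b1^2+b2^2) - 2*al*(u1*b1+u2*b2)) by ring.
  assert (E2 : (u1-b1)^2+(u2-b2)^2 = (u1^2+u2^2) + (b1^2+b2^2) - 2*(u1*b1+u2*b2)) by ring.
  rewrite E1, E2, H1. nra. Qed.

Lemma U2 u1 u2 w1 w2 al be : u1^2+u2^2 = 1 -> w1^2+w2^2 = 1 -> 1 <= al -> 1 <= be ->
  (u1-w1)^2+(u2-w2)^2 <= (al*u1-be*w1)^2+(al*u2-be*w2)^2.
Proof. intros H1 H2 H3 H4.
  pose proof (pow2_ge_0 (u1-w1)); pose proof (pow2_ge_0 (u2-w2)). assert (u1*w1+u2*w2 <= 1) by nra.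
  assert (0 <= (al*be-1)*(1 - (u1*w1+u2*w2))) by (apply Rmult_le_pos; nra).
  assert (E1 : (al*u1-be*w1)^2+(al*u2-be*w2)^2 = al^2*(u1^2+u2^2) + be^2*(w1^2+w2^2) - 2*al*be*(u1*w1+u2*w2)) by ring.
  assert (E2 : (u1-w1)^2+(u2-w2)^2 = (u1^2+u2^2) + (w1^2+w2^2) - 2*(u1*w1+u2*w2)) by ring.
  rewrite E1, E2, H1, H2. pose proof (pow2_ge_0 (al-be)). nra. Qed.

Lemma clip_decomp z : 1 < Cmod z -> fst z = Cmod z * (fst z / Cmod z) /\ snd z = Cmod z * (snd z / Cmod z).
Proof. intros; split; field; lra. Qed.

Lemma clip_nonexp_sq a b : sqn (clip a - clip b)%C <= sqn (a - b)%C.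
Proof.
  unfold clip, sqn; simpl.
  destruct (Rle_dec (Cmod a) 1) as [Ha|Ha]; destruct (Rle_dec (Cmod b) 1) as [Hb|Hb]; simpl; try lra.
  -
    assert (Hb' : 1 < Cmod b) by lra. pose proof (unit_sq b Hb').
    destruct (clip_decomp b Hb') as [E1 E2].
    apply Cmod_le_sqn in Ha; [|lra]. unfold sqn in Ha.
    set (w1 := fst b / Cmod b) in *. set (w2 := snd b / Cmod b) in *.
    rewrite E1, E2.
    pose proof (U1 w1 w2 (Cmod b) (fst a) (snd a) H ltac:(lra) ltac:(lra)). nra.
  - assert (Ha' : 1 < Cmod a) by lra. pose proof (unit_sq a Ha').
    destruct (clip_decomp a Ha') as [E1 E2].
    apply Cmod_le_sqn in Hb; [|lra]. unfold sqn in Hb.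
    set (w1 := fst a / Cmod a) in *. set (w2 := snd a / Cmod a) in *.
    rewrite E1, E2.
    pose proof (U1 w1 w2 (Cmod a) (fst b) (snd b) H ltac:(lra) ltac:(lra)). nra.
  - assert (Ha' : 1 < Cmod a) by lra. pose proof (unit_sq a Ha').
    assert (Hb' : 1 < Cmod b) by lra. pose proof (unit_sq b Hb').
    destruct (clip_decomp a Ha') as [E1 E2]. destruct (clip_decomp b Hb') as [E3 E4].
    set (w1 := fst a / Cmod a) in *. set (w2 := snd a / Cmod a) in *.
    set (v1 := fst b / Cmod b) in *. set (v2 := snd b / Cmod b) in *.
    rewrite E1, E2, E3, E4.
    pose proof (U2 w1 w2 v1 v2 (Cmod a) (Cmod b) H H0 ltac:(lra) ltac:(lra)). nra.
Qed.

Lemma Cmod_mono_sq a b : sqn a <= sqn b -> Cmod a <= Cmod b.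
Proof. intros H. unfold Cmod. apply sqrt_le_1_alt. unfold sqn in H. lra. Qed.

Lemma clip_nonexp a b : Cmod (clip a - clip b)%C <= Cmod (a - b)%C.
Proof. apply Cmod_mono_sq, clip_nonexp_sq. Qed.

Lemma clip_id z : Cmod z <= 1 -> clip z = z.
Proof. unfold clip; destruct (Rle_dec (Cmod z) 1); auto; lra. Qed.

(* the mixability constant *)
Definition eta := / 32.

Lemma exp_tangent_aux s q : s <= 1/2 -> 2 * s^2 <= q -> exp (-(s+q)) <= 1 - s.
Proof. intros H1 H2.
  assert (exp (-(s+q)) <= exp (-(s + 2*s^2))).
  { destruct (Req_dec q (2*s^2)). subst; lra. apply Rlt_le, exp_increasing; lra. }
  assert (E : exp (-(s + 2*s^2)) = / exp (s + 2*s^2)) by (rewrite exp_Ropp; auto).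
  pose proof (exp_ineq1_le (s + 2*s^2)).
  assert (0 < 1 + (s + 2*s^2)) by nra.
  assert (/ exp (s + 2*s^2) <= / (1 + (s + 2*s^2))) by (apply Rinv_le_contravar; lra).
  assert (/ (1 + (s + 2 * s ^ 2)) <= 1 - s).
  { apply (Rmult_le_reg_l (1 + (s + 2*s^2))); [lra|]. rewrite Rinv_r; [|lra].
    assert (0 <= s^2 * (1 - 2*s)) by (apply Rmult_le_pos; nra). nra. }
  lra. Qed.

Lemma tangent y1 y2 g1 g2 m1 m2 :
  y1^2+y2^2 <= 1 -> g1^2+g2^2 <= 1 -> m1^2+m2^2 <= 1 ->
  exp (- eta * ((y1-m1)^2+(y2-m2)^2)) <=
  exp (- eta * ((y1-g1)^2+(y2-g2)^2)) * (1 - 2*eta*((g1-y1)*(m1-g1)+(g2-y2)*(m2-g2))).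
Proof. intros Hy Hg Hm. unfold eta.
  set (v1 := g1 - y1). set (v2 := g2 - y2). set (d1 := m1 - g1). set (d2 := m2 - g2).
  assert (Hv : v1^2+v2^2 <= 4).
  { unfold v1, v2. assert (E: (g1-y1)^2+(g2-y2)^2 = 2*(g1^2+g2^2) + 2*(y1^2+y2^2) - ((g1+y1)^2+(g2+y2)^2)) by ring.
    rewrite E. pose proof (pow2_ge_0 (g1+y1)); pose proof (pow2_ge_0 (g2+y2)). lra. }
  assert (Hd : d1^2+d2^2 <= 4).
  { unfold d1, d2. assert (E: (m1-g1)^2+(m2-g2)^2 = 2*(m1^2+m2^2) + 2*(g1^2+g2^2) - ((m1+g1)^2+(m2+g2)^2)) by ring.
    rewrite E. pose proof (pow2_ge_0 (m1+g1)); pose proof (pow2_ge_0 (m2+g2)). lra. }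
  assert (CS : (v1*d1+v2*d2)^2 <= (v1^2+v2^2)*(d1^2+d2^2)).
  { assert (E: (v1^2+v2^2)*(d1^2+d2^2) = (v1*d1+v2*d2)^2 + (v1*d2-v2*d1)^2) by ring.
    rewrite E. pose proof (pow2_ge_0 (v1*d2-v2*d1)). lra. }
  assert (Hv0 : 0 <= v1^2+v2^2) by (pose proof (pow2_ge_0 v1); pose proof (pow2_ge_0 v2); lra).
  assert (Hd0 : 0 <= d1^2+d2^2) by (pose proof (pow2_ge_0 d1); pose proof (pow2_ge_0 d2); lra).
  assert (CS2 : (v1*d1+v2*d2)^2 <= 4*(d1^2+d2^2)).
  { eapply Rle_trans; [exact CS|]. apply Rmult_le_compat_r; lra. }
  set (s := 2 * /32 * (v1*d1+v2*d2)). set (q := /32 * (d1^2+d2^2)).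
  assert (Hs2 : s^2 <= 1/16).
  { unfold s. assert (E: (2 * / 32 * (v1 * d1 + v2 * d2)) ^ 2 = /256 * (v1*d1+v2*d2)^2) by field.
    rewrite E. lra. }
  assert (Hs : s <= 1/2).
  { destruct (Rle_dec s (1/2)); auto. assert (1/4 < s^2) by nra. lra. }
  assert (Hq : 2*s^2 <= q).
  { unfold s, q. assert (E: 2 * (2 * / 32 * (v1 * d1 + v2 * d2)) ^ 2 = /128 * (v1*d1+v2*d2)^2) by field.
    rewrite E. lra. }
  pose proof (exp_tangent_aux s q Hs Hq).
  assert (E : - / 32 * ((y1 - m1) ^ 2 + (y2 - m2) ^ 2) = - / 32 * ((y1 - g1) ^ 2 + (y2 - g2) ^ 2) + (-(s+q))).
  { unfold s, q, v1, v2, d1, d2. field. }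
  rewrite E, exp_plus. apply Rmult_le_compat_l; [apply Rlt_le, exp_pos|].
  exact H. Qed.

Lemma lsum_lin3 {I} (l : list I) (w m1 m2 : I -> R) a b c :
  lsum l (fun i => a * w i + b * (w i * m1 i) + c * (w i * m2 i)) =
  a * lsum l w + b * lsum l (fun i => w i * m1 i) + c * lsum l (fun i => w i * m2 i).
Proof. induction l; [unfold lsum; simpl; lra|]. rewrite !lsum_cons, IHl; lra. Qed.

Lemma jensen {I} (l : list I) (w m1 m2 : I -> R) y1 y2 g1 g2 :
  (forall i, In i l -> 0 <= w i) ->
  (forall i, In i l -> m1 i ^2 + m2 i ^2 <= 1) ->
  y1^2+y2^2 <= 1 -> g1^2+g2^2 <= 1 ->
  lsum l (fun i => w i * m1 i) = lsum l w * g1 ->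
  lsum l (fun i => w i * m2 i) = lsum l w * g2 ->
  lsum l (fun i => w i * exp (- eta * ((y1 - m1 i)^2 + (y2 - m2 i)^2)))
  <= lsum l w * exp (- eta * ((y1-g1)^2+(y2-g2)^2)).
Proof. intros Hw Hm Hy Hg E1 E2.
  set (P := exp (- eta * ((y1-g1)^2+(y2-g2)^2))).
  eapply Rle_trans.
  { apply (lsum_le l _ (fun i => (P + P*2*eta*(g1-y1)*g1 + P*2*eta*(g2-y2)*g2) * w i
      + (- P*2*eta*(g1-y1)) * (w i * m1 i) + (- P*2*eta*(g2-y2)) * (w i * m2 i))).
    intros i Hi. pose proof (tangent y1 y2 g1 g2 (m1 i) (m2 i) Hy Hg (Hm i Hi)).
    pose proof (Hw i Hi). fold P in H.
    assert (w i * exp (- eta * ((y1 - m1 i) ^ 2 + (y2 - m2 i) ^ 2)) <=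
            w i * (P * (1 - 2 * eta * ((g1 - y1) * (m1 i - g1) + (g2 - y2) * (m2 i - g2)))))
      by (apply Rmult_le_compat_l; auto).
    lra. }
  rewrite lsum_lin3, E1, E2. lra.
Qed.

Definition cw (j : nat) : R := / ((INR j + 1) * (INR j + 2)).

Lemma cw_pos j : 0 < cw j.
Proof. unfold cw. pose proof (pos_INR j). apply Rinv_0_lt_compat. nra. Qed.

Lemma cw_sum B : lsum (seq 0 B) cw = 1 - / (INR B + 1).
Proof. induction B.
  - simpl. unfold lsum; simpl. field.
  - rewrite seq_S, lsum_app, IHB, lsum_cons, lsum_nil, Nat.add_0_l, S_INR. unfold cw.
    pose proof (pos_INR B). field. split; lra. Qed.

Lemma cw_sum_le B : lsum (seq 0 B) cw <= 1.
Proof. rewrite cw_sum. pose proof (pos_INR B). assert (0 < / (INR B + 1)) by (apply Rinv_0_lt_compat; lra). lra. Qed.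

Definition act (L M : R) (j n : nat) : bool :=
  andb (Nat.leb j (2 ^ n)) (if Rle_dec (L * rpow (2 * INR j) M) (INR n) then true else false).

Lemma rpow_0 M : rpow 0 M = 0.
Proof. unfold rpow. destruct (Rlt_dec 0 0); lra. Qed.

Lemma act_0 L M n : act L M 0 n = true.
Proof. unfold act. simpl Nat.leb. rewrite Rmult_0_r, rpow_0, Rmult_0_r.
  destruct (Rle_dec 0 (INR n)); auto. pose proof (pos_INR n); lra. Qed.

Lemma act_mono L M j n : act L M j n = true -> act L M j (S n) = true.
Proof. unfold act. intros H. apply andb_prop in H. destruct H as [H1 H2].
  apply andb_true_intro. split.
  - apply Nat.leb_le in H1. apply Nat.leb_le. simpl. lia.
  - destruct (Rle_dec (L * rpow (2 * INR j) M) (INR n)) as [Ha|Ha]; try discriminate.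
    destruct (Rle_dec (L * rpow (2 * INR j) M) (INR (S n))) as [Hb|Hb]; auto. rewrite S_INR in Hb; lra. Qed.

Lemma act_bound L M j n : act L M j n = true -> (j <= 2 ^ n)%nat.
Proof. unfold act. intros H. apply andb_prop in H. destruct H as [H1 _]. apply Nat.leb_le; auto. Qed.

Definition expert {X} (j : nat) (s : X -> C) (x : X) : C := clip (Cmult (RtoC (2 ^ j)) (s x)).

Definition loss (y z : C) : R := sqn (y - z)%C.


Definition mu {X} L M (j : nat) (s : X -> C) (xs : nat -> X) (g : nat -> C) (n : nat) : C :=
  if act L M j n then expert j s (xs n) else g n.

Definition V {X} L M j (s : X -> C) xs (ys : nat -> C) g n : R :=
  sumN (fun i => loss (ys i) (mu L M j s xs g i)) n.

Definition wt {X} L M (Lnet : nat -> list (X -> C)) j (s : X -> C) (xs : nat -> X) ys g n : R :=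
  cw j / INR (length (Lnet j)) * exp (- eta * V L M j s xs ys g n).

Definition esum {X} (Lnet : nat -> list (X -> C)) (B : nat) (f : nat -> (X -> C) -> R) : R :=
  lsum (seq 0 B) (fun j => lsum (Lnet j) (fun s => f j s)).

Definition den {X} L M Lnet (xs : nat -> X) ys g n :=
  esum Lnet (2 ^ n + 1) (fun j s => if act L M j n then wt L M Lnet j s xs ys g n else 0).
Definition num1 {X} L M Lnet (xs : nat -> X) ys g n :=
  esum Lnet (2 ^ n + 1) (fun j s => if act L M j n then wt L M Lnet j s xs ys g n * fst (expert j s (xs n)) else 0).
Definition num2 {X} L M Lnet (xs : nat -> X) ys g n :=
  esum Lnet (2 ^ n + 1) (fun j s => if act L M j n then wt L M Lnet j s xs ys g n * snd (expert j s (xs n)) else 0).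

Definition predict {X} L M Lnet (xs : nat -> X) ys g n : C :=
  (num1 L M Lnet xs ys g n / den L M Lnet xs ys g n, num2 L M Lnet xs ys g n / den L M Lnet xs ys g n).

Fixpoint gs {X} L M Lnet (xs : nat -> X) ys (n : nat) : list C :=
  match n with
  | O => nil
  | S k => gs L M Lnet xs ys k ++ (predict L M Lnet xs ys (fun i => nth i (gs L M Lnet xs ys k) (RtoC 0)) k :: nil)
  end.

Definition strat {X} L M Lnet : strategy X := fun h x =>
  let n := length h in
  let xs := fun i => if Nat.ltb i n then fst (nth i h (x, RtoC 0)) else x in
  let ys := fun i => snd (nth i h (x, RtoC 0)) in
  predict L M Lnet xs ys (fun i => nth i (gs L M Lnet xs ys n) (RtoC 0)) n.

Lemma esum_ext {X} (Lnet : nat -> list (X -> C)) B f g :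
  (forall j s, f j s = g j s) -> esum Lnet B f = esum Lnet B g.
Proof. intros H. unfold esum. apply lsum_ext; intros. apply lsum_ext; intros; auto. Qed.

Lemma V_ext {X} L M j (s : X -> C) xs xs' ys ys' g g' n :
  (forall i, (i < n)%nat -> xs i = xs' i) -> (forall i, (i < n)%nat -> ys i = ys' i) ->
  (forall i, (i < n)%nat -> g i = g' i) ->
  V L M j s xs ys g n = V L M j s xs' ys' g' n.
Proof. intros H1 H2 H3. unfold V. apply sumN_ext. intros i Hi. unfold mu.
  rewrite H1, H2, H3; auto. Qed.

Lemma wt_ext {X} L M Lnet j (s : X -> C) xs xs' ys ys' g g' n :
  (forall i, (i < n)%nat -> xs i = xs' i) -> (forall i, (i < n)%nat -> ys i = ys' i) ->
  (forall i, (i < n)%nat -> g i = g' i) ->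
  wt L M Lnet j s xs ys g n = wt L M Lnet j s xs' ys' g' n.
Proof. intros. unfold wt. erewrite V_ext; eauto. Qed.

Lemma predict_ext {X} L M Lnet (xs xs' : nat -> X) ys ys' g g' n :
  (forall i, (i <= n)%nat -> xs i = xs' i) -> (forall i, (i < n)%nat -> ys i = ys' i) ->
  (forall i, (i < n)%nat -> g i = g' i) ->
  predict L M Lnet xs ys g n = predict L M Lnet xs' ys' g' n.
Proof. intros H1 H2 H3.
  assert (H1' : forall i, (i < n)%nat -> xs i = xs' i) by (intros; apply H1; lia).
  unfold predict, num1, num2, den.
  rewrite (esum_ext _ _ _ (fun j s => if act L M j n then wt L M Lnet j s xs' ys' g' n * fst (expert j s (xs' n)) else 0)).
  rewrite (esum_ext _ _ (fun j s => if act L M j n then wt L M Lnet j s xs ys g n * snd (expert j s (xs n)) else 0)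
     (fun j s => if act L M j n then wt L M Lnet j s xs' ys' g' n * snd (expert j s (xs' n)) else 0)).
  rewrite (esum_ext _ _ (fun j s => if act L M j n then wt L M Lnet j s xs ys g n else 0)
     (fun j s => if act L M j n then wt L M Lnet j s xs' ys' g' n else 0)). reflexivity.
  all: intros j s; destruct (act L M j n); auto; rewrite (wt_ext L M Lnet j s xs xs' ys ys' g g' n); auto;
       rewrite H1; auto.
Qed.

Lemma gs_length {X} L M Lnet (xs : nat -> X) ys n : length (gs L M Lnet xs ys n) = n.
Proof. induction n; simpl; auto. rewrite length_app, IHn; simpl; lia. Qed.

Lemma gs_ext {X} L M Lnet (xs xs' : nat -> X) ys ys' n :
  (forall i, (i < n)%nat -> xs i = xs' i) -> (forall i, (i < n)%nat -> ys i = ys' i) ->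
  gs L M Lnet xs ys n = gs L M Lnet xs' ys' n.
Proof. induction n; intros H1 H2; simpl; auto.
  rewrite IHn by (intros; auto). f_equal. f_equal.
  apply predict_ext; intros; auto. apply H1; lia. Qed.

Definition gamma {X} L M Lnet (xs : nat -> X) ys (n : nat) : C :=
  predict L M Lnet xs ys (fun i => nth i (gs L M Lnet xs ys n) (RtoC 0)) n.

Lemma gs_nth {X} L M Lnet (xs : nat -> X) ys n k : (k < n)%nat ->
  nth k (gs L M Lnet xs ys n) (RtoC 0) = gamma L M Lnet xs ys k.
Proof. induction n; intros Hk; [lia|]. simpl.
  destruct (Nat.lt_ge_cases k n).
  - rewrite app_nth1 by (rewrite gs_length; auto). auto.
  - assert (k = n) by lia. subst. rewrite app_nth2 by (rewrite gs_length; lia).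
    rewrite gs_length, Nat.sub_diag. reflexivity. Qed.

Lemma gamma_fix {X} L M Lnet (xs : nat -> X) ys n :
  gamma L M Lnet xs ys n = predict L M Lnet xs ys (gamma L M Lnet xs ys) n.
Proof. unfold gamma at 1. apply predict_ext; auto. intros i Hi. apply gs_nth; auto. Qed.

Lemma nth_history {X} (x : nat -> X) y n i d : (i < n)%nat -> nth i (history x y n) d = (x i, y i).
Proof. intros Hi. unfold history.
  rewrite (@nth_indep _ _ _ d ((fun i => (x i, y i)) 0%nat)) by (rewrite length_map, length_seq; auto).
  rewrite (map_nth (fun i => (x i, y i))), seq_nth; auto. Qed.

Lemma strat_gamma {X} L M Lnet (x : nat -> X) y n :
  pred_move (strat L M Lnet) x y n = gamma L M Lnet x y n.
Proof. unfold pred_move, strat, gamma.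
  assert (Hl : length (history x y n) = n) by (unfold history; rewrite length_map, length_seq; auto).
  rewrite Hl.
  set (xs := fun i => if Nat.ltb i n then fst (nth i (history x y n) (x n, RtoC 0)) else x n).
  set (ys := fun i => snd (nth i (history x y n) (x n, RtoC 0))).
  assert (Hx : forall i, (i <= n)%nat -> xs i = x i).
  { intros i Hi. unfold xs. destruct (Nat.ltb_spec i n).
    rewrite nth_history; auto. assert (i = n) by lia. subst; auto. }
  assert (Hy : forall i, (i < n)%nat -> ys i = y i).
  { intros i Hi. unfold ys. rewrite nth_history; auto. }
  rewrite (gs_ext L M Lnet xs x ys y n) by (intros; auto; apply Hx; lia).
  apply predict_ext; auto.
Qed.

Lemma loss_eq y z : loss y z = (fst y - fst z)^2 + (snd y - snd z)^2.
Proof. unfold loss, sqn. simpl. ring. Qed.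

Lemma loss_ge0 y z : 0 <= loss y z.
Proof. rewrite loss_eq. pose proof (pow2_ge_0 (fst y - fst z)); pose proof (pow2_ge_0 (snd y - snd z)); lra. Qed.

Definition idx {X} (Lnet : nat -> list (X -> C)) B : list (nat * (X -> C)) :=
  flat_map (fun j => map (fun s => (j, s)) (Lnet j)) (seq 0 B).

Lemma esum_idx {X} (Lnet : nat -> list (X -> C)) B f :
  esum Lnet B f = lsum (idx Lnet B) (fun p => f (fst p) (snd p)).
Proof. unfold esum, idx. rewrite lsum_flat_map. apply lsum_ext; intros j _.
  rewrite lsum_map. reflexivity. Qed.

Lemma esum_plus {X} (Lnet : nat -> list (X -> C)) B f g :
  esum Lnet B (fun j s => f j s + g j s) = esum Lnet B f + esum Lnet B g.
Proof. rewrite !esum_idx. apply lsum_plus. Qed.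
Lemma esum_scal {X} (Lnet : nat -> list (X -> C)) B c f :
  esum Lnet B (fun j s => c * f j s) = c * esum Lnet B f.
Proof. rewrite !esum_idx. apply lsum_scal. Qed.
Lemma esum_nonneg {X} (Lnet : nat -> list (X -> C)) B f :
  (forall j s, 0 <= f j s) -> 0 <= esum Lnet B f.
Proof. intros H. rewrite esum_idx. apply lsum_nonneg; auto. Qed.
Lemma esum_in_le {X} (Lnet : nat -> list (X -> C)) B f j s :
  (forall j s, 0 <= f j s) -> (j < B)%nat -> In s (Lnet j) -> f j s <= esum Lnet B f.
Proof. intros H Hj Hs. rewrite esum_idx. apply (lsum_in_le _ (fun p => f (fst p) (snd p)) (j, s)).
  intros; auto. unfold idx. apply in_flat_map. exists j. split. apply in_seq; lia.
  apply in_map; auto. Qed.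
Lemma esum_split {X} (Lnet : nat -> list (X -> C)) K B f :
  (K <= B)%nat -> (forall j s, (K <= j)%nat -> f j s = 0) -> esum Lnet B f = esum Lnet K f.
Proof. intros HK H. unfold esum. replace B with (K + (B - K))%nat by lia.
  rewrite seq_app, lsum_app. rewrite (lsum_zero (seq (0 + K) (B - K))). lra.
  intros j Hj. apply in_seq in Hj. apply lsum_zero. intros; apply H; lia. Qed.

Lemma esum_const_cw {X} (Lnet : nat -> list (X -> C)) B :
  (forall j, (0 < length (Lnet j))%nat) ->
  esum Lnet B (fun j s => cw j / INR (length (Lnet j))) = lsum (seq 0 B) cw.
Proof. intros HL. unfold esum. apply lsum_ext. intros j _. rewrite lsum_const.
  field. apply not_0_INR. specialize (HL j). lia. Qed.

Lemma norm_sum {I} (l : list I) (w e1 e2 : I -> R) :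
  (forall i, In i l -> 0 <= w i) -> (forall i, In i l -> e1 i ^ 2 + e2 i ^ 2 <= 1) ->
  Cmod (lsum l (fun i => w i * e1 i), lsum l (fun i => w i * e2 i)) <= lsum l w.
Proof. induction l; intros Hw He.
  - unfold lsum; simpl. unfold Cmod; simpl. rewrite Rmult_0_l, Rplus_0_r, sqrt_0. lra.
  - rewrite !lsum_cons.
    assert (Cmod (Cplus (w a * e1 a, w a * e2 a) (lsum l (fun i => w i * e1 i), lsum l (fun i => w i * e2 i)))
            <= Cmod (w a * e1 a, w a * e2 a) + Cmod (lsum l (fun i => w i * e1 i), lsum l (fun i => w i * e2 i)))
      by apply Cmod_triangle.
    assert (Cmod (w a * e1 a, w a * e2 a) <= w a).
    { pose proof (Hw a (or_introl eq_refl)). apply Cmod_le_sqn; auto. unfold sqn; simpl fst; simpl snd.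
      pose proof (He a (or_introl eq_refl)).
      assert (E: (w a * e1 a) ^ 2 + (w a * e2 a) ^ 2 = w a ^ 2 * (e1 a ^ 2 + e2 a ^ 2)) by ring.
      rewrite E. pose proof (pow2_ge_0 (w a)). nra. }
    assert (Cmod (lsum l (fun i => w i * e1 i), lsum l (fun i => w i * e2 i)) <= lsum l w)
      by (apply IHl; intros; [apply Hw|apply He]; simpl; auto).
    assert (Epair : Cplus (w a * e1 a, w a * e2 a) (lsum l (fun i => w i * e1 i), lsum l (fun i => w i * e2 i))
       = (w a * e1 a + lsum l (fun i => w i * e1 i), w a * e2 a + lsum l (fun i => w i * e2 i))) by reflexivity.
    rewrite Epair in H. lra.
Qed.

Lemma expert_norm {X} j (s : X -> C) x : fst (expert j s x) ^ 2 + snd (expert j s x) ^ 2 <= 1.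
Proof. pose proof (clip_norm (Cmult (RtoC (2 ^ j)) (s x))). apply Cmod_le_sqn in H; [|lra].
  unfold sqn in H. unfold expert. lra. Qed.

Lemma wt_pos {X} L M Lnet j (s : X -> C) xs ys g n :
  (0 < length (Lnet j))%nat -> 0 < wt L M Lnet j s xs ys g n.
Proof. intros H. unfold wt. apply Rmult_lt_0_compat; [|apply exp_pos].
  apply Rdiv_lt_0_compat; [apply cw_pos|]. apply lt_0_INR; auto. Qed.

Lemma den_pos {X} L M Lnet (xs : nat -> X) ys g n :
  (forall j, (0 < length (Lnet j))%nat) -> 0 < den L M Lnet xs ys g n.
Proof. intros HL. unfold den.
  destruct (Lnet 0%nat) as [|s0 l0] eqn:E. { specialize (HL 0%nat). rewrite E in HL; simpl in HL; lia. }
  eapply Rlt_le_trans; [|apply (esum_in_le _ _ _ 0%nat s0)].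
  - cbv beta. rewrite (act_0 L M n). apply wt_pos; auto.
  - intros j s. destruct (act L M j n); [apply Rlt_le, wt_pos; auto|lra].
  - lia.
  - rewrite E; simpl; auto.
Qed.

Lemma predict_norm {X} L M Lnet (xs : nat -> X) ys g n :
  (forall j, (0 < length (Lnet j))%nat) ->
  fst (predict L M Lnet xs ys g n) ^ 2 + snd (predict L M Lnet xs ys g n) ^ 2 <= 1.
Proof. intros HL. pose proof (den_pos L M Lnet xs ys g n HL) as Hd.
  unfold predict; simpl fst; simpl snd.
  assert (Cmod (num1 L M Lnet xs ys g n, num2 L M Lnet xs ys g n) <= den L M Lnet xs ys g n).
  { unfold num1, num2, den. rewrite !esum_idx.
    set (w := fun p : nat * (X -> C) => if act L M (fst p) n then wt L M Lnet (fst p) (snd p) xs ys g n else 0).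
    rewrite (lsum_ext _ _ (fun p => w p * fst (expert (fst p) (snd p) (xs n)))).
    rewrite (lsum_ext _ (fun p => if act L M (fst p) n then wt L M Lnet (fst p) (snd p) xs ys g n * snd (expert (fst p) (snd p) (xs n)) else 0) (fun p => w p * snd (expert (fst p) (snd p) (xs n)))).
    apply norm_sum.
    - intros p _. unfold w. destruct (act L M (fst p) n); [apply Rlt_le, wt_pos; auto|lra].
    - intros; apply expert_norm.
    - intros p _; unfold w; destruct (act L M (fst p) n); lra.
    - intros p _; unfold w; destruct (act L M (fst p) n); lra. }
  apply Cmod_le_sqn in H; [|lra]. unfold sqn in H; simpl fst in H; simpl snd in H.
  assert (E : (num1 L M Lnet xs ys g n / den L M Lnet xs ys g n) ^ 2 + (num2 L M Lnet xs ys g n / den L M Lnet xs ys g n) ^ 2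
    = (num1 L M Lnet xs ys g n ^ 2 + num2 L M Lnet xs ys g n ^ 2) / den L M Lnet xs ys g n ^ 2) by (field; lra).
  rewrite E. apply (Rmult_le_reg_r (den L M Lnet xs ys g n ^ 2)). nra.
  unfold Rdiv. rewrite Rmult_assoc, Rinv_l by (apply pow_nonzero; lra). lra.
Qed.

Definition LAA (g ys : nat -> C) n := sumN (fun i => loss (ys i) (g i)) n.

Definition Pot {X} L M Lnet (xs : nat -> X) ys g B n :=
  esum Lnet B (fun j s => wt L M Lnet j s xs ys g n) + (1 - lsum (seq 0 B) cw) * exp (- eta * LAA g ys n).

Lemma Pot_0 {X} L M Lnet (xs : nat -> X) ys g B :
  (forall j, (0 < length (Lnet j))%nat) -> Pot L M Lnet xs ys g B 0 = 1.
Proof. intros HL. unfold Pot, LAA. rewrite sumN_0, Rmult_0_r, exp_0, Rmult_1_r.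
  rewrite (esum_ext _ _ _ (fun j s => cw j / INR (length (Lnet j)))).
  rewrite esum_const_cw; auto. ring.
  intros j s. unfold wt, V. rewrite sumN_0, Rmult_0_r, exp_0. ring. Qed.

Lemma wt_S {X} L M Lnet j (s : X -> C) xs ys g n :
  wt L M Lnet j s xs ys g (S n) = wt L M Lnet j s xs ys g n * exp (- eta * loss (ys n) (mu L M j s xs g n)).
Proof. unfold wt, V. rewrite sumN_S. rewrite Rmult_plus_distr_l, exp_plus. ring. Qed.

Lemma comp_lemma {X} L M Lnet (xs : nat -> X) ys g n B (comp : C -> R) :
  (forall j, (0 < length (Lnet j))%nat) -> (2 ^ n + 1 <= B)%nat ->
  comp (g n) = esum Lnet (2 ^ n + 1) (fun j s => if act L M j n then wt L M Lnet j s xs ys g n * comp (expert j s (xs n)) else 0)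
               / den L M Lnet xs ys g n ->
  esum Lnet B (fun j s => wt L M Lnet j s xs ys g n * comp (mu L M j s xs g n))
  = esum Lnet B (fun j s => wt L M Lnet j s xs ys g n) * comp (g n).
Proof. intros HL HB Hc.
  pose proof (den_pos L M Lnet xs ys g n HL) as Hd.
  set (w := fun j s => wt L M Lnet j s xs ys g n).
  rewrite (esum_ext _ _ _ (fun j s => (if act L M j n then w j s * comp (expert j s (xs n)) else 0)
                                + comp (g n) * (if act L M j n then 0 else w j s))).
  2:{ intros j s. unfold mu, w. destruct (act L M j n); ring. }
  rewrite (esum_ext _ _ (fun j s => w j s) (fun j s => (if act L M j n then w j s else 0) + 1 * (if act L M j n then 0 else w j s))).
  2:{ intros j s. destruct (act L M j n); ring. }
  rewrite !esum_plus, !esum_scal.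
  assert (Hz : forall (f : nat -> (X -> C) -> R), esum Lnet B (fun j s => if act L M j n then f j s else 0)
       = esum Lnet (2 ^ n + 1) (fun j s => if act L M j n then f j s else 0)).
  { intros f. apply esum_split; auto. intros j s Hj. destruct (act L M j n) eqn:Ea; auto.
    apply act_bound in Ea. lia. }
  rewrite !Hz. unfold w. fold (den L M Lnet xs ys g n).
  set (nc := esum Lnet (2 ^ n + 1) (fun j s => if act L M j n then wt L M Lnet j s xs ys g n * comp (expert j s (xs n)) else 0)) in *.
  rewrite Hc. field. lra.
Qed.

Lemma Pot_step {X} L M Lnet (xs : nat -> X) ys g B n :
  (forall j, (0 < length (Lnet j))%nat) -> (2 ^ n + 1 <= B)%nat ->
  (forall k, g k = predict L M Lnet xs ys g k) ->
  fst (ys n) ^ 2 + snd (ys n) ^ 2 <= 1 ->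
  Pot L M Lnet xs ys g B (S n) <= Pot L M Lnet xs ys g B n * exp (- eta * loss (ys n) (g n)).
Proof. intros HL HB Hg Hy.
  assert (Hgn : fst (g n) ^ 2 + snd (g n) ^ 2 <= 1) by (rewrite Hg; apply predict_norm; auto).
  unfold Pot.
  rewrite (esum_ext _ _ _ (fun j s => wt L M Lnet j s xs ys g n * exp (- eta * loss (ys n) (mu L M j s xs g n))))
    by (intros; apply wt_S).
  assert (HLA : LAA g ys (S n) = LAA g ys n + loss (ys n) (g n)) by (unfold LAA; rewrite sumN_S; auto).
  rewrite HLA, Rmult_plus_distr_l, exp_plus.
  assert (J : esum Lnet B (fun j s => wt L M Lnet j s xs ys g n * exp (- eta * loss (ys n) (mu L M j s xs g n)))
     <= esum Lnet B (fun j s => wt L M Lnet j s xs ys g n) * exp (- eta * loss (ys n) (g n))).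
  { rewrite !esum_idx. rewrite loss_eq.
    rewrite (lsum_ext _ _ (fun p => wt L M Lnet (fst p) (snd p) xs ys g n *
        exp (- eta * ((fst (ys n) - fst (mu L M (fst p) (snd p) xs g n)) ^ 2 + (snd (ys n) - snd (mu L M (fst p) (snd p) xs g n)) ^ 2))))
      by (intros; rewrite loss_eq; auto).
    apply jensen; auto.
    - intros p _. apply Rlt_le, wt_pos; auto.
    - intros p _. unfold mu. destruct (act L M (fst p) n); auto. apply expert_norm.
    - pose proof (comp_lemma L M Lnet xs ys g n B fst HL HB) as Hc. rewrite !esum_idx in Hc. apply Hc.
      rewrite Hg at 1. unfold predict, num1. rewrite esum_idx. reflexivity.
    - pose proof (comp_lemma L M Lnet xs ys g n B snd HL HB) as Hc. rewrite !esum_idx in Hc. apply Hc.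
      rewrite Hg at 1. unfold predict, num2. rewrite esum_idx. reflexivity. }
  lra.
Qed.

Lemma Pot_bound {X} L M Lnet (xs : nat -> X) ys g B N :
  (forall j, (0 < length (Lnet j))%nat) -> (2 ^ N + 1 <= B)%nat ->
  (forall k, g k = predict L M Lnet xs ys g k) ->
  (forall i, (i < N)%nat -> fst (ys i) ^ 2 + snd (ys i) ^ 2 <= 1) ->
  forall n, (n <= N)%nat -> Pot L M Lnet xs ys g B n <= exp (- eta * LAA g ys n).
Proof. intros HL HB Hg Hy. induction n; intros Hn.
  - rewrite Pot_0; auto. unfold LAA. rewrite sumN_0, Rmult_0_r, exp_0. lra.
  - eapply Rle_trans.
    { apply Pot_step; [exact HL | | exact Hg | apply Hy; lia].
      assert (2 ^ n <= 2 ^ N)%nat by (apply Nat.pow_le_mono_r; lia). lia. }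
    replace (LAA g ys (S n)) with (LAA g ys n + loss (ys n) (g n)) by (unfold LAA; rewrite sumN_S; auto).
    rewrite Rmult_plus_distr_l, exp_plus.
    apply Rmult_le_compat_r; [apply Rlt_le, exp_pos|]. apply IHn; lia.
Qed.

Lemma aa_bound {X} L M Lnet (xs : nat -> X) ys g N j s :
  (forall j, (0 < length (Lnet j))%nat) ->
  (forall k, g k = predict L M Lnet xs ys g k) ->
  (forall i, (i < N)%nat -> fst (ys i) ^ 2 + snd (ys i) ^ 2 <= 1) ->
  In s (Lnet j) ->
  LAA g ys N <= V L M j s xs ys g N + 32 * (ln (INR (length (Lnet j))) - ln (cw j)).
Proof. intros HL Hg Hy Hs.
  set (B := (2 ^ N + 1 + j + 1)%nat).
  assert (H1 : Pot L M Lnet xs ys g B N <= exp (- eta * LAA g ys N)) by (apply (Pot_bound L M Lnet xs ys g B N); auto; unfold B; lia).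
  assert (H2 : wt L M Lnet j s xs ys g N <= Pot L M Lnet xs ys g B N).
  { unfold Pot. assert (0 <= (1 - lsum (seq 0 B) cw) * exp (- eta * LAA g ys N)).
    { apply Rmult_le_pos; [pose proof (cw_sum_le B); lra | apply Rlt_le, exp_pos]. }
    assert (wt L M Lnet j s xs ys g N <= esum Lnet B (fun j s => wt L M Lnet j s xs ys g N)).
    { apply (esum_in_le _ _ (fun j s => wt L M Lnet j s xs ys g N)); auto.
      intros; apply Rlt_le, wt_pos; auto. unfold B; lia. }
    lra. }
  assert (H3 : wt L M Lnet j s xs ys g N <= exp (- eta * LAA g ys N)) by lra.
  unfold wt in H3.
  pose proof (cw_pos j). assert (Hlen : 0 < INR (length (Lnet j))) by (apply lt_0_INR; auto).
  assert (Hp : 0 < cw j / INR (length (Lnet j)) * exp (- eta * V L M j s xs ys g N)).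
  { apply Rmult_lt_0_compat; [apply Rdiv_lt_0_compat; auto|apply exp_pos]. }
  apply ln_le in H3; auto. rewrite ln_exp in H3.
  unfold Rdiv in H3. assert (0 < / INR (length (Lnet j))) by (apply Rinv_0_lt_compat; auto).
  rewrite !ln_mult in H3; auto; try (apply Rmult_lt_0_compat; auto); try apply exp_pos.
  rewrite ln_exp, ln_Rinv in H3; auto. unfold eta in H3. lra.
Qed.

Lemma Cmod_sub_le2 y z : Cmod y <= 1 -> Cmod z <= 1 -> Cmod (y - z)%C <= 2.
Proof. intros H1 H2. unfold Cminus. eapply Rle_trans; [apply Cmod_triangle|]. rewrite Cmod_opp. lra. Qed.

Lemma loss_active y H F e : Cmod y <= 1 -> Cmod (H - F)%C <= e ->
  loss y (clip H) - Cmod (y - F)%C ^ 2 <= 4 * e.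
Proof. intros Hy HHF.
  set (a := Cmod (y - clip H)%C). set (b := Cmod (y - clip F)%C). set (c := Cmod (y - F)%C).
  assert (Hbc : b <= c).
  { unfold b, c. rewrite <- (clip_id y Hy) at 1. apply clip_nonexp. }
  assert (Hab : a <= b + e).
  { unfold a, b. assert (E : (y - clip H)%C = ((y - clip F) + (clip F - clip H))%C)
      by (apply injective_projections; simpl; ring).
    rewrite E. eapply Rle_trans; [apply Cmod_triangle|].
    assert (Cmod (clip F - clip H)%C <= e).
    { eapply Rle_trans; [apply clip_nonexp|].
      assert (E2 : (F - H)%C = (- (H - F))%C) by (apply injective_projections; simpl; ring).
      rewrite E2, Cmod_opp; auto. }
    lra. }
  assert (Ha2 : a <= 2) by (apply Cmod_sub_le2; auto; apply clip_norm).
  assert (Hb2 : b <= 2) by (apply Cmod_sub_le2; auto; apply clip_norm).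
  assert (0 <= a) by apply Cmod_ge0. assert (0 <= b) by apply Cmod_ge0. assert (0 <= c) by apply Cmod_ge0.
  assert (0 <= e) by (pose proof (Cmod_ge0 (H - F)%C); lra).
  unfold loss. rewrite <- Cmod_sq. fold a.
  assert (b ^ 2 <= c ^ 2) by (apply pow_incr; lra).
  destruct (Rle_dec a b). { assert (a^2 <= b^2) by (apply pow_incr; lra). nra. }
  assert (a ^ 2 - b ^ 2 = (a - b) * (a + b)) by ring.
  assert ((a - b) * (a + b) <= e * 4) by (apply Rmult_le_compat; lra).
  lra.
Qed.

Lemma loss_inactive y z : fst y ^ 2 + snd y ^ 2 <= 1 -> fst z ^ 2 + snd z ^ 2 <= 1 -> loss y z <= 4.
Proof. intros H1 H2. rewrite loss_eq.
  assert (E: (fst y - fst z)^2+(snd y - snd z)^2 = 2*(fst y ^ 2 + snd y ^ 2) + 2*(fst z ^ 2 + snd z ^ 2) - ((fst y + fst z)^2+(snd y + snd z)^2)) by ring.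
  rewrite E. pose proof (pow2_ge_0 (fst y + fst z)); pose proof (pow2_ge_0 (snd y + snd z)). lra. Qed.

Lemma rpow_ge0 t M : 0 <= rpow t M.
Proof. unfold rpow. destruct (Rlt_dec 0 t). unfold Rpower; apply Rlt_le, exp_pos. lra. Qed.

Lemma log2_ge0 t : 1 <= t -> 0 <= log2 t.
Proof. intros. unfold log2. apply Rmult_le_pos. rewrite <- ln_1. apply ln_le; lra.
  apply Rlt_le, Rinv_0_lt_compat. rewrite <- ln_1. apply ln_increasing; lra. Qed.

Definition Kj (L M : R) (j : nat) : R := log2 (INR j) + L * rpow (2 * INR j) M.

Lemma inactive_bound L M j i : 0 <= L -> (1 <= j)%nat -> act L M j i = false -> INR i < Kj L M j.
Proof. intros HL Hj Ha. unfold act in Ha. unfold Kj.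
  assert (H0 : 0 <= log2 (INR j)) by (apply log2_ge0; apply (le_INR 1); auto).
  assert (H1 : 0 <= L * rpow (2 * INR j) M) by (apply Rmult_le_pos; auto; apply rpow_ge0).
  destruct (Nat.leb j (2 ^ i)) eqn:Hb; simpl in Ha.
  - destruct (Rle_dec (L * rpow (2 * INR j) M) (INR i)); try discriminate. lra.
  - apply Nat.leb_gt in Hb. apply lt_INR in Hb. rewrite pow_INR in Hb. simpl (INR 2) in Hb.
    assert (0 < 2 ^ i) by (apply pow_lt; lra).
    apply ln_increasing in Hb; auto. rewrite ln_pow in Hb by lra.
    assert (0 < ln 2) by (rewrite <- ln_1; apply ln_increasing; lra).
    assert (INR i < log2 (INR j)). { unfold log2. apply (Rmult_lt_reg_r (ln 2)); auto. unfold Rdiv.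
      rewrite Rmult_assoc, Rinv_l by lra. replace (1+1) with 2 in Hb by ring. lra. }
    lra.
Qed.

Lemma sumN_scal c f N : sumN (fun i => c * f i) N = c * sumN f N.
Proof. induction N. rewrite !sumN_0; lra. rewrite !sumN_S, IHN; lra. Qed.

Lemma regret_expert {X} L M Lnet (xs : nat -> X) ys g N j s (F : X -> C) e :
  0 <= L -> (1 <= j)%nat -> 0 <= e ->
  (forall j, (0 < length (Lnet j))%nat) ->
  (forall k, g k = predict L M Lnet xs ys g k) ->
  (forall i, Cmod (ys i) <= 1) ->
  In s (Lnet j) ->
  (forall x, Cmod (Cmult (RtoC (2 ^ j)) (s x) - F x)%C <= 2 * e) ->
  LAA g ys N - sumN (fun i => Cmod (ys i - F (xs i))%C ^ 2) N
  <= 8 * e * INR N + 4 * (Kj L M j + 1) + 32 * (ln (INR (length (Lnet j))) - ln (cw j)).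
Proof. intros HL Hj He HLn Hg Hy Hs HF.
  assert (Hy2 : forall i, fst (ys i) ^ 2 + snd (ys i) ^ 2 <= 1).
  { intros i. pose proof (Hy i). apply Cmod_le_sqn in H; [|lra]. unfold sqn in H. lra. }
  pose proof (aa_bound L M Lnet xs ys g N j s HLn Hg (fun i _ => Hy2 i) Hs).
  assert (V L M j s xs ys g N - sumN (fun i => Cmod (ys i - F (xs i))%C ^ 2) N
          <= 8 * e * INR N + 4 * (Kj L M j + 1)).
  { unfold V. rewrite <- sumN_minus.
    eapply Rle_trans.
    { apply (sumN_le _ (fun i => 8 * e + 4 * (if negb (act L M j i) then 1 else 0))).
      intros i _. unfold mu. destruct (act L M j i) eqn:Ea; simpl negb.
      - unfold expert. pose proof (loss_active (ys i) (Cmult (RtoC (2 ^ j)) (s (xs i))) (F (xs i)) (2*e) (Hy i) (HF (xs i))). lra.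
      - pose proof (loss_inactive (ys i) (g i) (Hy2 i) ltac:(rewrite Hg; apply predict_norm; auto)).
        pose proof (pow2_ge_0 (Cmod (ys i - F (xs i))%C)). lra. }
    rewrite sumN_plus, sumN_const.
    assert (sumN (fun i => 4 * (if negb (act L M j i) then 1 else 0)) N = 4 * sumN (fun i => if negb (act L M j i) then 1 else 0) N).
    { apply sumN_scal. }
    rewrite H0.
    assert (sumN (fun i => if negb (act L M j i) then 1 else 0) N <= Kj L M j + 1).
    { apply sumN_count.
      - unfold Kj. pose proof (log2_ge0 (INR j) ltac:(apply (le_INR 1); auto)).
        pose proof (rpow_ge0 (2 * INR j) M). pose proof (Rmult_le_pos _ _ HL H2). lra.
      - intros i Hi. apply inactive_bound; auto. destruct (act L M j i); auto; discriminate. }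
    lra. }
  lra.
Qed.

Lemma nat_between x : 0 <= x -> exists n : nat, x <= INR n <= x + 1.
Proof. intros Hx. destruct (archimed x) as [H1 H2].
  assert (Hz : (0 <= up x)%Z) by (apply le_IZR; lra).
  exists (Z.to_nat (up x)). rewrite INR_IZR_INZ, Z2Nat.id; auto. lra. Qed.

Lemma ln2_pos : 0 < ln 2.
Proof. pose proof ln_lt_2. lra. Qed.
Lemma ln2_lt1 : ln 2 < 1.
Proof. rewrite <- (ln_exp 1). apply ln_increasing; [lra|]. pose proof (exp_ineq1 1 ltac:(lra)). lra. Qed.

Lemma Rpower_log2 y : 0 < y -> Rpower 2 (log2 y) = y.
Proof. intros Hy. unfold Rpower, log2. pose proof ln2_pos.
  replace (ln y / ln 2 * ln 2) with (ln y) by (field; lra). apply exp_ln; auto. Qed.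

Lemma log2_pow2 n : log2 (2 ^ n) = INR n.
Proof. unfold log2. rewrite ln_pow by lra. pose proof ln2_pos. field. lra. Qed.

Lemma log2_le x y : 0 < x -> x <= y -> log2 x <= log2 y.
Proof. intros. unfold log2. pose proof ln2_pos. unfold Rdiv. apply Rmult_le_compat_r.
  apply Rlt_le, Rinv_0_lt_compat; auto. apply ln_le; auto. Qed.

Lemma rpow_pos_eq t M : 0 < t -> rpow t M = Rpower t M.
Proof. intros. unfold rpow. destruct (Rlt_dec 0 t); auto; lra. Qed.

Lemma rpow_mono a b M : 0 < M -> 0 <= a <= b -> rpow a M <= rpow b M.
Proof. intros HM [Ha Hb]. destruct (Req_dec a 0).
  - subst. rewrite rpow_0. apply rpow_ge0.
  - rewrite !rpow_pos_eq by lra. apply Rle_Rpower_l; lra. Qed.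

Lemma rpow_scal c t M : 0 < c -> 0 <= t -> rpow (c * t) M = Rpower c M * rpow t M.
Proof. intros Hc Ht. destruct (Req_dec t 0).
  - subst. rewrite Rmult_0_r, !rpow_0. ring.
  - rewrite !rpow_pos_eq by nra. rewrite Rpower_mult_distr; auto; lra. Qed.

Lemma rpow_sum3 x y z M : 0 < M -> 0 <= x -> 0 <= y -> 0 <= z ->
  rpow (x + y + z) M <= Rpower 3 M * (rpow x M + rpow y M + rpow z M).
Proof. intros HM Hx Hy Hz.
  set (m := Rmax x (Rmax y z)).
  assert (Hm : x <= m /\ y <= m /\ z <= m).
  { unfold m. pose proof (Rmax_l x (Rmax y z)). pose proof (Rmax_r x (Rmax y z)).
    pose proof (Rmax_l y z). pose proof (Rmax_r y z). lra. }
  assert (H1 : rpow (x + y + z) M <= rpow (3 * m) M) by (apply rpow_mono; lra).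
  rewrite rpow_scal in H1 by lra.
  assert (H2 : rpow m M <= rpow x M + rpow y M + rpow z M).
  { pose proof (rpow_ge0 x M). pose proof (rpow_ge0 y M). pose proof (rpow_ge0 z M).
    unfold m. destruct (Rle_dec y z).
    - rewrite (Rmax_right y z) by lra. destruct (Rle_dec x z); [rewrite Rmax_right by lra|rewrite Rmax_left by lra]; lra.
    - rewrite (Rmax_left y z) by lra. destruct (Rle_dec x y); [rewrite Rmax_right by lra|rewrite Rmax_left by lra]; lra. }
  assert (0 < Rpower 3 M) by (unfold Rpower; apply exp_pos).
  nra.
Qed.

Lemma ln_le_pow x M dl : 0 < x -> 0 < M -> 0 < dl ->
  ln x <= dl * Rpower x M - (1 + ln (M * dl)) / M.
Proof. intros Hx HM Hd.
  set (t := M * dl * Rpower x M).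
  assert (Ht : 0 < t) by (unfold t, Rpower; pose proof (exp_pos (M * ln x)); pose proof (Rmult_lt_0_compat _ _ HM Hd); nra).
  pose proof (exp_ineq1_le (ln t)). rewrite exp_ln in H by auto.
  assert (E : ln t = ln (M * dl) + M * ln x).
  { unfold t. assert (0 < M * dl) by nra. assert (0 < Rpower x M) by (unfold Rpower; apply exp_pos).
    rewrite ln_mult by auto. unfold Rpower. rewrite ln_exp. auto. }
  rewrite E in H. apply (Rmult_le_reg_l M); auto. unfold t in H.
  assert (M * (dl * Rpower x M - (1 + ln (M * dl)) / M) = M * dl * Rpower x M - (1 + ln (M * dl))) by (field; lra).
  lra. Qed.

Lemma glb_near (E : R -> Prop) b : Rbar_le (Glb_Rbar E) (Finite b) -> exists r, E r /\ r < b + 1.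
Proof. intros H. apply NNPP. intros Hn.
  assert (Hlb : is_lb_Rbar E (Finite (b + 1))).
  { intros r Hr. simpl. destruct (Rle_dec (b+1) r); auto. exfalso; apply Hn; exists r; split; auto; lra. }
  destruct (Glb_Rbar_correct E) as [_ Hg]. specialize (Hg _ Hlb).
  pose proof (Rbar_le_trans _ _ _ Hg H). simpl in H0. lra. Qed.

Lemma glb_lb (E : R -> Prop) r : E r -> Rbar_le (Glb_Rbar E) (Finite r).
Proof. intros H. destruct (Glb_Rbar_correct E) as [Hl _]. apply Hl; auto. Qed.

Lemma glb_ge (E : R -> Prop) b : (forall r, E r -> b <= r) -> Rbar_le (Finite b) (Glb_Rbar E).
Proof. intros H. destruct (Glb_Rbar_correct E) as [_ Hg]. apply Hg. intros r Hr; simpl; auto. Qed.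

Lemma glb_finite (E : R -> Prop) b r : (forall r, E r -> b <= r) -> E r ->
  Glb_Rbar E = Finite (real (Glb_Rbar E)) /\ b <= real (Glb_Rbar E).
Proof. intros H1 H2. pose proof (glb_ge E b H1). pose proof (glb_lb E r H2).
  destruct (Glb_Rbar E); simpl in *; try tauto. Qed.

Lemma sup_pt {X} (f : X -> C) : (exists B, forall x, Cmod (f x) <= B) -> forall x, Cmod (f x) <= supnorm f.
Proof. intros [B HB] x. unfold supnorm.
  destruct (Lub_Rbar_correct (fun r => exists x, r = Cmod (f x))) as [Hu Hl].
  assert (H1 : Rbar_le (Finite (Cmod (f x))) (Lub_Rbar (fun r => exists x, r = Cmod (f x)))) by (apply Hu; eauto).
  assert (H2 : Rbar_le (Lub_Rbar (fun r => exists x, r = Cmod (f x))) (Finite B)).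
  { apply Hl. intros r [y ->]. simpl; auto. }
  destruct (Lub_Rbar (fun r => exists x, r = Cmod (f x))); simpl in *; tauto. Qed.

Lemma bounded_sub {X} (f g : X -> C) : (exists B, forall x, Cmod (f x) <= B) -> (exists B, forall x, Cmod (g x) <= B) ->
  exists B, forall x, Cmod (fsub f g x) <= B.
Proof. intros [B1 H1] [B2 H2]. exists (B1 + B2). intros x. unfold fsub, Cminus.
  eapply Rle_trans; [apply Cmod_triangle|]. rewrite Cmod_opp. specialize (H1 x); specialize (H2 x); lra. Qed.

Lemma Rbar_mult_le h q c : 0 < q -> Rbar_le (Rbar_mult h (Finite q)) (Finite c) -> Rbar_le h (Finite (c / q)).
Proof. intros Hq H. destruct h as [h| |]; simpl in *.
  - apply (Rmult_le_reg_r q); auto. unfold Rdiv. rewrite Rmult_assoc, Rinv_l by lra. lra.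
  - unfold Rbar_mult in H; simpl in H. destruct (Rle_dec 0 q); [|lra].
    destruct (Rle_lt_or_eq_dec 0 q r); simpl in H; [tauto|lra].
  - auto. Qed.

Lemma pow2_ge n : INR n + 1 <= 2 ^ n.
Proof. induction n. simpl; lra. rewrite S_INR. simpl pow. pose proof (pos_INR n). lra. Qed.

Lemma logp_ge0 A : 0 <= logp A.
Proof. unfold logp. destruct (Rle_dec 1 A). apply log2_ge0; auto. lra. Qed.

Lemma log2_mult x y : 0 < x -> 0 < y -> log2 (x * y) = log2 x + log2 y.
Proof. intros. unfold log2. rewrite ln_mult by auto. pose proof ln2_pos. field. lra. Qed.

Lemma log2_2 : log2 2 = 1.
Proof. unfold log2. pose proof ln2_pos. field. lra. Qed.

Lemma log2_A1 A : 0 <= A -> log2 (A + 1) <= logp A + 1.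
Proof. intros HA. unfold logp. destruct (Rle_dec 1 A).
  - assert (log2 (A + 1) <= log2 (2 * A)) by (apply log2_le; lra).
    rewrite log2_mult, log2_2 in H by lra. lra.
  - assert (log2 (A + 1) <= log2 2) by (apply log2_le; lra). rewrite log2_2 in H. lra. Qed.

Definition Dcst L M (J0 : nat) : R :=
  141 + 72 * Rabs ((1 + ln (M * (L / 72))) / M) + 69 * Rpower 3 M * L * rpow (2 * INR J0 + 6) M.

Lemma Dcst_ge1 L M J0 : 0 < L -> 1 <= Dcst L M J0.
Proof. intros HL. unfold Dcst. pose proof (Rabs_pos ((1 + ln (M * (L / 72))) / M)).
  pose proof (rpow_ge0 (2 * INR J0 + 6) M). assert (0 < Rpower 3 M) by (unfold Rpower; apply exp_pos).
  assert (0 <= 69 * Rpower 3 M * L * rpow (2 * INR J0 + 6) M).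
  { apply Rmult_le_pos; [|auto]. apply Rmult_le_pos; lra. }
  lra. Qed.

Lemma final_numeric L M (J0 a b : nat) lA lE eps NN Rg (nn : nat) :
  0 < L -> 0 < M -> 0 < eps -> 0 <= NN -> (1 <= J0)%nat -> 0 <= lA -> 0 <= lE ->
  INR a <= lA + 2 -> INR b <= lE + 1 -> (1 <= nn)%nat ->
  log2 (INR nn) < 2 * L * rpow (2 * INR (J0 + a + b)) M + 1 ->
  Rg <= 8 * eps * NN + 4 * (Kj L M (J0 + a + b) + 1) + 32 * (ln (INR (S nn)) - ln (cw (J0 + a + b))) ->
  Rg <= (69 * Rpower 6 M + 8) * (L * rpow lA M + L * rpow lE M + eps * NN) + (Dcst L M J0 - 1).
Proof.
  intros HL HM He HN HJ0 HlA HlE Ha Hb Hnn Hlog HR.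
  set (j := (J0 + a + b)%nat) in *.
  assert (Hj1 : 1 <= INR j) by (apply (le_INR 1); unfold j; lia).
  set (rho := rpow (2 * INR j) M) in *.
  assert (Hrho : 0 <= rho) by apply rpow_ge0.
  pose proof ln2_pos as Hl2. pose proof ln2_lt1 as Hl21. pose proof ln_lt_2 as Hl22.
  assert (Hn1 : 1 <= INR nn) by (apply (le_INR 1); auto).
  assert (Hln : ln (INR (S nn)) <= 2 * L * rho + 2).
  { rewrite S_INR. assert (ln (INR nn + 1) <= ln (2 * INR nn)) by (apply ln_le; lra).
    rewrite ln_mult in H by lra.
    assert (E : ln (INR nn) = ln 2 * log2 (INR nn)) by (unfold log2; field; lra).
    assert (0 <= log2 (INR nn)) by (apply log2_ge0; auto).
    assert (ln 2 * log2 (INR nn) <= log2 (INR nn)) by nra.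
    assert (0 <= L * rho) by (apply Rmult_le_pos; lra).
    lra. }
  assert (Hj2 : 0 < INR j + 2) by lra.
  assert (Hcw : - ln (cw j) <= 2 * ln (INR j + 2)).
  { unfold cw. rewrite ln_Rinv by nra. 
    assert (ln ((INR j + 1) * (INR j + 2)) <= ln ((INR j + 2) * (INR j + 2))) by (apply ln_le; nra).
    rewrite !ln_mult in H by lra. rewrite ln_mult by lra. lra. }
  assert (Hlj : log2 (INR j) <= 2 * ln (INR j + 2)).
  { unfold log2. assert (0 <= ln (INR j)) by (rewrite <- ln_1; apply ln_le; lra).
    assert (ln (INR j) <= ln (INR j + 2)) by (apply ln_le; lra).
    assert (ln (INR j) / ln 2 <= 2 * ln (INR j)).
    { apply (Rmult_le_reg_r (ln 2)); auto. unfold Rdiv. rewrite Rmult_assoc, Rinv_l by lra. nra. }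
    lra. }
  assert (Hj22 : ln (INR j + 2) <= ln (2 * INR j) + 1).
  { pose proof (exp_ineq1_le 1). 
    assert (ln (INR j + 2) <= ln (2 * INR j * exp 1)) by (apply ln_le; nra).
    rewrite ln_mult, ln_exp in H0 by (try apply exp_pos; lra). lra. }
  assert (H2j : ln (2 * INR j) <= L / 72 * rho + Rabs ((1 + ln (M * (L / 72))) / M)).
  { pose proof (ln_le_pow (2 * INR j) M (L / 72) ltac:(lra) HM ltac:(lra)).
    unfold rho. rewrite rpow_pos_eq by lra.
    pose proof (Rabs_maj2 ((1 + ln (M * (L / 72))) / M)). lra. }
  assert (HK : Kj L M j = log2 (INR j) + L * rho) by reflexivity.
  assert (Hrb : rho <= Rpower 3 M * rpow (2 * INR J0 + 6) M + Rpower 6 M * (rpow lA M + rpow lE M)).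
  { assert (Hjj : 2 * INR j <= (2 * INR J0 + 6) + 2 * lA + 2 * lE).
    { unfold j. rewrite !plus_INR. lra. }
    assert (HJ0r : 0 <= INR J0) by apply pos_INR.
    unfold rho. eapply Rle_trans. apply rpow_mono; [auto|split; [lra|exact Hjj]].
    eapply Rle_trans. apply rpow_sum3; lra.
    rewrite !rpow_scal by lra.
    replace (Rpower 6 M) with (Rpower 3 M * Rpower 2 M) by (rewrite Rpower_mult_distr by lra; f_equal; ring).
    lra. }
  assert (H3 : 0 < Rpower 3 M) by (unfold Rpower; apply exp_pos).
  assert (H6 : 0 < Rpower 6 M) by (unfold Rpower; apply exp_pos).
  assert (HrA : 0 <= rpow lA M) by apply rpow_ge0.
  assert (HrE : 0 <= rpow lE M) by apply rpow_ge0.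
  assert (HR2 : Rg <= 8 * eps * NN + 69 * L * rho + 140 + 72 * Rabs ((1 + ln (M * (L / 72))) / M)).
  { rewrite HK in HR. nra. }
  assert (HLr : L * rho <= L * (Rpower 3 M * rpow (2 * INR J0 + 6) M) + L * (Rpower 6 M * (rpow lA M + rpow lE M))).
  { rewrite <- Rmult_plus_distr_l. apply Rmult_le_compat_l; lra. }
  unfold Dcst.
  assert (0 <= eps * NN) by (apply Rmult_le_pos; lra).
  assert (0 <= L * rpow lA M + L * rpow lE M) by (apply Rplus_le_le_0_compat; apply Rmult_le_pos; lra).
  assert (69 * Rpower 6 M * (L * rpow lA M + L * rpow lE M + eps * NN) >= 69 * Rpower 6 M * (L * rpow lA M + L * rpow lE M)).
  { apply Rle_ge, Rmult_le_compat_l; lra. }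
  nra.
Qed.

Lemma log2_Rpower t : log2 (Rpower 2 t) = t.
Proof. unfold log2, Rpower. rewrite ln_exp. pose proof ln2_pos. field. lra. Qed.

Lemma value_ge L M D (N0 N : nat) eps lA : 0 < L -> 0 < M -> 1 <= D ->
  D * Rpower 2 (Rpower (D / L) (/ M)) <= INR N0 -> (N0 <= N)%nat -> 0 < eps <= 1 ->
  D <= L * rpow lA M + L * rpow (log2 (/ eps)) M + eps * INR N.
Proof. intros HL HM HD HN0 HN He.
  set (t0 := Rpower (D / L) (/ M)).
  assert (Ht0 : 0 < t0) by (unfold t0, Rpower; apply exp_pos).
  assert (H2t : 0 < Rpower 2 t0) by (unfold Rpower; apply exp_pos).
  assert (HNr : INR N0 <= INR N) by (apply le_INR; auto).
  assert (0 < D * Rpower 2 t0) by (apply Rmult_lt_0_compat; lra).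
  fold t0 in HN0.
  assert (HNp : 0 < INR N) by lra.
  assert (HA : 0 <= L * rpow lA M) by (apply Rmult_le_pos; [lra|apply rpow_ge0]).
  destruct (Rle_dec D (eps * INR N)).
  - assert (0 <= L * rpow (log2 (/ eps)) M) by (apply Rmult_le_pos; [lra|apply rpow_ge0]). lra.
  - assert (Hlt : eps < D / INR N).
    { apply (Rmult_lt_reg_r (INR N)); auto. unfold Rdiv. rewrite Rmult_assoc, Rinv_l by lra. lra. }
    assert (Hie : Rpower 2 t0 <= / eps).
    { assert (Rpower 2 t0 <= INR N / D).
      { apply (Rmult_le_reg_l D); [lra|]. assert (D * (INR N / D) = INR N) by (field; lra). lra. }
      assert (INR N / D <= / eps).
      { assert (Eq1 : INR N / D = / (D / INR N)) by (field; lra). rewrite Eq1.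
        apply Rinv_le_contravar; lra. }
      lra. }
    assert (Hl : t0 <= log2 (/ eps)).
    { rewrite <- (log2_Rpower t0) at 1. apply log2_le; auto. }
    assert (Hr : rpow t0 M <= rpow (log2 (/ eps)) M) by (apply rpow_mono; lra).
    rewrite rpow_pos_eq in Hr by auto. unfold t0 in Hr. rewrite Rpower_mult in Hr.
    rewrite Rinv_l in Hr by lra. rewrite Rpower_1 in Hr by (apply Rdiv_lt_0_compat; lra).
    assert (L * (D / L) <= L * rpow (log2 (/ eps)) M) by (apply Rmult_le_compat_l; lra).
    assert (L * (D / L) = D) by (field; lra).
    pose proof (Rmult_le_pos _ _ (Rlt_le _ _ (proj1 He)) (pos_INR N)). lra.
Qed.

Lemma approach_pick {X} (T : topology X) Fsp nF F eps :
  (forall f, Fsp f -> 0 <= nF f) ->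
  (forall G, CX T G -> forall e, 0 < e -> exists f, Fsp f /\ supnorm (fsub G f) < e) ->
  CX T F -> 0 < eps ->
  0 <= approach T Fsp nF eps F /\
  exists Fs, Fsp Fs /\ supnorm (fsub F Fs) <= eps /\ nF Fs < approach T Fsp nF eps F + 1.
Proof. intros Hnn Hden HF He.
  set (E := fun r => exists Fs, Fsp Fs /\ supnorm (fsub F Fs) <= eps /\ r = nF Fs).
  destruct (Hden F HF eps He) as (f & Hf & Hsf).
  assert (HEf : E (nF f)) by (exists f; repeat split; auto; lra).
  assert (Hlb : forall r, E r -> 0 <= r) by (intros r (Fs & H1 & _ & ->); auto).
  destruct (glb_finite E 0 (nF f) Hlb HEf) as [Hfin Hge].
  unfold approach. fold E. split; auto.
  assert (Rbar_le (Glb_Rbar E) (Finite (real (Glb_Rbar E)))) by (rewrite Hfin at 1; simpl; lra).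
  destruct (glb_near E _ H) as (r & (Fs & H1 & H2 & ->) & H3). exists Fs; auto.
Qed.

Lemma net_from_hent {X} (A : (X -> C) -> Prop) eps M c :
  0 < rpow (log2 (/ eps)) M ->
  Rbar_le (Rbar_mult (Hent A eps) (Finite (/ rpow (log2 (/ eps)) M))) (Finite c) ->
  exists l, (forall s, In s l -> A s) /\ (forall a, A a -> exists s, In s l /\ supnorm (fsub a s) <= eps) /\
    log2 (INR (length l)) < c * rpow (log2 (/ eps)) M + 1.
Proof. intros Hr H. apply Rbar_mult_le in H; [|apply Rinv_0_lt_compat; auto].
  unfold Hent in H. destruct (glb_near _ _ H) as (r & (n & (l & Hl1 & Hl2 & Hl3) & ->) & Hlt).
  exists l. split; auto. split; auto. rewrite Hl1.
  replace (c / / rpow (log2 (/ eps)) M) with (c * rpow (log2 (/ eps)) M) in Hlt by (field; lra). auto.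
Qed.

Lemma Cmult_RtoC c z : Cmult (RtoC c) z = (c * fst z, c * snd z).
Proof. apply injective_projections; simpl; ring. Qed.

Lemma approx_pt {X} (F Fs u s : X -> C) (j : nat) eps :
  (forall x, u x = Cmult (RtoC (/ 2 ^ j)) (Fs x)) ->
  (exists B, forall x, Cmod (F x) <= B) -> (exists B, forall x, Cmod (Fs x) <= B) ->
  (exists B, forall x, Cmod (u x) <= B) -> (exists B, forall x, Cmod (s x) <= B) ->
  supnorm (fsub F Fs) <= eps -> supnorm (fsub u s) <= / 2 ^ (2 * j) -> / 2 ^ j <= eps ->
  forall x, Cmod (Cmult (RtoC (2 ^ j)) (s x) - F x)%C <= 2 * eps.
Proof. intros Hu HF HFs Hub Hs H1 H2 H3 x.
  pose proof (sup_pt _ (bounded_sub F Fs HF HFs) x) as P1. unfold fsub in P1.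
  pose proof (sup_pt _ (bounded_sub u s Hub Hs) x) as P2. unfold fsub in P2. unfold fsub in H1, H2.
  assert (Hp : 0 < 2 ^ j) by (apply pow_lt; lra).
  assert (E : (Cmult (RtoC (2 ^ j)) (s x) - F x)%C =
              Cplus (Cmult (RtoC (2 ^ j)) (Copp (Cminus (u x) (s x)))) (Copp (Cminus (F x) (Fs x)))).
  { rewrite !Cmult_RtoC, Hu, Cmult_RtoC. apply injective_projections; simpl; field; apply Rgt_not_eq, Hp. }
  rewrite E. eapply Rle_trans; [apply Cmod_triangle|]. rewrite Cmod_mult, !Cmod_opp, Cmod_R, Rabs_right by lra.
  assert (2 ^ j * Cmod (u x - s x)%C <= 2 ^ j * / 2 ^ (2 * j)) by (apply Rmult_le_compat_l; lra).
  replace (2 * j)%nat with (j + j)%nat in H by lia. rewrite pow_add in H.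
  replace (2 ^ j * / (2 ^ j * 2 ^ j)) with (/ 2 ^ j) in H by (field; apply Rgt_not_eq, Hp).
  lra.
Qed.

Theorem corollary6 :
  forall M : R, 0 < M ->
  exists CM : R,
  forall (X : Type) (T : topology X), inhabited X ->
  forall (Fsp : (X -> C) -> Prop) (nF : (X -> C) -> R),
    banach_cd_embedded T Fsp nF ->
  forall L : R, 0 < L ->
    limsup0_is
      (fun eps => Rbar_mult (Hent (unit_ball Fsp nF) eps)
                            (Finite (/ rpow (log2 (/ eps)) M))) L ->
  exists S : strategy X,
  forall F : X -> C, CX T F ->
  exists N0 : nat, forall N : nat, (N0 <= N)%nat ->
  forall (x : nat -> X) (y : nat -> C), (forall n, Cmod (y n) <= 1) ->
    sumN (fun n => (Cmod (Cminus (y n) (pred_move S x y n))) ^ 2) N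
    <= sumN (fun n => (Cmod (Cminus (y n) (F (x n)))) ^ 2) N
       + CM * real (Glb_Rbar (fun r => exists eps, 0 < eps <= 1 /\
             r = L * rpow (logp (approach T Fsp nF eps F)) M
                 + L * rpow (log2 (/ eps)) M
                 + eps * INR N)).
Proof.
  intros M HM.
  set (C1 := 69 * Rpower 6 M + 8).
  assert (HC1 : 8 <= C1) by (unfold C1; assert (0 < Rpower 6 M) by (unfold Rpower; apply exp_pos); lra).
  exists (C1 + 1).
  intros X T Hinh Fsp nF Hban L HL Hlim.
  destruct Hban as (HCX & Hz & Hadd & Hsc & Hnn & Hn0 & Hhom & Htri & Hcpl & Hden & Hcpt).
  destruct Hlim as [Hlim1 _].
  destruct (Hlim1 L HL) as (d & Hd & Hdb).
  destruct (nat_between (/ d)) as (J0' & HJ0'). { apply Rlt_le, Rinv_0_lt_compat; auto. }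
  set (J0 := S J0').
  assert (HJ0d : forall j, (J0 <= j)%nat -> / 2 ^ (2 * j) < d).
  { intros j Hj. pose proof (pow2_ge (2 * j)).
    assert (INR J0 <= INR (2 * j)) by (apply le_INR; lia).
    unfold J0 in H0. rewrite S_INR in H0.
    assert (Hp : 0 < 2 ^ (2 * j)) by (apply pow_lt; lra).
    assert (/ d < 2 ^ (2 * j)) by lra.
    rewrite <- (Rinv_inv d). apply Rinv_lt_contravar; auto.
    apply Rmult_lt_0_compat; auto. apply Rinv_0_lt_compat; auto. }
  set (NetP := fun (j : nat) (l : list (X -> C)) =>
     (forall s, In s l -> unit_ball Fsp nF s) /\
     (forall a, unit_ball Fsp nF a -> exists s, In s l /\ supnorm (fsub a s) <= / 2 ^ (2 * j)) /\
     log2 (INR (length l)) < 2 * L * rpow (2 * INR j) M + 1).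
  assert (Hnet : forall j, (J0 <= j)%nat -> exists l, NetP j l).
  { intros j Hj.
    assert (Hlg : log2 (/ / 2 ^ (2 * j)) = 2 * INR j).
    { rewrite Rinv_inv, log2_pow2, mult_INR. simpl (INR 2). ring. }
    assert (HjJ : (1 <= j)%nat) by (unfold J0 in Hj; lia).
    assert (Hrp : 0 < rpow (2 * INR j) M).
    { assert (1 <= INR j) by (apply (le_INR 1); auto). rewrite rpow_pos_eq by lra. unfold Rpower; apply exp_pos. }
    assert (He : 0 < / 2 ^ (2 * j) < d) by (split; [apply Rinv_0_lt_compat, pow_lt; lra | apply HJ0d; auto]).
    specialize (Hdb _ He). cbv beta in Hdb. rewrite Hlg in Hdb.
    destruct (net_from_hent (unit_ball Fsp nF) (/ 2 ^ (2 * j)) M (L + L)) as (l & H1 & H2 & H3).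
    - rewrite Hlg; auto.
    - rewrite Hlg; auto.
    - exists l. unfold NetP. rewrite Hlg in H3. split; [exact H1|split; [exact H2|]]. eapply Rlt_le_trans; [exact H3|apply Req_le; ring]. }
  set (Lnet := fun j => fzero :: epsilon (inhabits nil) (NetP j)).
  exists (strat L M Lnet).
  intros F HF.
  set (Dc := Dcst L M J0).
  assert (HD : 1 <= Dc) by (apply Dcst_ge1; auto).
  destruct (nat_between (Dc * Rpower 2 (Rpower (Dc / L) (/ M)))) as (N0 & HN0).
  { apply Rmult_le_pos; [lra|unfold Rpower; apply Rlt_le, exp_pos]. }
  exists N0. intros N HN x y Hy.
  set (g := gamma L M Lnet x y).
  assert (HLn : forall j, (0 < length (Lnet j))%nat) by (intros; simpl; lia).
  assert (Hg : forall k, g k = predict L M Lnet x y g k) by (intros; apply gamma_fix).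
  assert (HLHS : sumN (fun n => Cmod (Cminus (y n) (pred_move (strat L M Lnet) x y n)) ^ 2) N = LAA g y N).
  { unfold LAA. apply sumN_ext. intros i _. rewrite strat_gamma. unfold loss. rewrite Cmod_sq. reflexivity. }
  rewrite HLHS.
  set (LossF := sumN (fun n => Cmod (Cminus (y n) (F (x n))) ^ 2) N).
  set (value := fun eps => L * rpow (logp (approach T Fsp nF eps F)) M + L * rpow (log2 (/ eps)) M + eps * INR N).
  assert (Hmain : forall eps, 0 < eps <= 1 -> LAA g y N - LossF <= (C1 + 1) * value eps).
  { intros eps He.
    destruct (approach_pick T Fsp nF F eps Hnn Hden HF (proj1 He)) as (HA & Fs & HFs & HFsF & HnFs).
    set (A := approach T Fsp nF eps F) in *.
    destruct (nat_between (log2 (A + 1))) as (a & Ha). { apply log2_ge0; lra. }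
    assert (Hie : 1 <= / eps). { rewrite <- Rinv_1. apply Rinv_le_contravar; lra. }
    destruct (nat_between (log2 (/ eps))) as (b & Hb). { apply log2_ge0; lra. }
    set (j := (J0 + a + b)%nat).
    assert (HjJ : (J0 <= j)%nat) by (unfold j; lia).
    assert (Hj1 : (1 <= j)%nat) by (unfold j, J0; lia).
    pose proof (epsilon_spec (inhabits nil) (NetP j) (Hnet j HjJ)) as HNP.
    set (nl := epsilon (inhabits nil) (NetP j)) in *.
    destruct HNP as (Hn1 & Hn2 & Hn3).
    assert (H2a : A + 1 <= 2 ^ a).
    { rewrite <- (Rpower_log2 (A + 1)) by lra. rewrite <- Rpower_pow by lra. apply Rle_Rpower; lra. }
    assert (H2b : / eps <= 2 ^ b).
    { rewrite <- (Rpower_log2 (/ eps)) by lra. rewrite <- Rpower_pow by lra. apply Rle_Rpower; lra. }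
    assert (Hja : 2 ^ a <= 2 ^ j) by (apply Rle_pow; [lra|unfold j; lia]).
    assert (Hjb : 2 ^ b <= 2 ^ j) by (apply Rle_pow; [lra|unfold j; lia]).
    assert (Hpj : 0 < 2 ^ j) by (apply pow_lt; lra).
    set (u := fscal (RtoC (/ 2 ^ j)) Fs).
    assert (Hub : unit_ball Fsp nF u).
    { split. apply Hsc; auto. unfold u. rewrite Hhom by auto. rewrite Cmod_R, Rabs_right.
      2:{ apply Rle_ge, Rlt_le, Rinv_0_lt_compat; auto. }
      apply (Rmult_le_reg_l (2 ^ j)); auto. rewrite <- Rmult_assoc, Rinv_r by lra. lra. }
    destruct (Hn2 u Hub) as (s & Hs & Hsup).
    assert (HFsb : exists B, forall x, Cmod (Fs x) <= B) by (apply (HCX Fs HFs)).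
    assert (Hubb : exists B, forall x, Cmod (u x) <= B) by (apply (HCX u (proj1 Hub))).
    assert (Hsb : exists B, forall x, Cmod (s x) <= B) by (apply (HCX s (proj1 (Hn1 s Hs)))).
    assert (HFb : exists B, forall x, Cmod (F x) <= B) by (apply HF).
    assert (Hje : / 2 ^ j <= eps).
    { rewrite <- (Rinv_inv eps). apply Rinv_le_contravar; [apply Rinv_0_lt_compat; lra|lra]. }
    pose proof (approx_pt F Fs u s j eps (fun x => eq_refl) HFb HFsb Hubb Hsb HFsF Hsup Hje) as Hpt.
    assert (HinL : In s (Lnet j)) by (simpl; right; auto).
    pose proof (regret_expert L M Lnet x y g N j s F eps ltac:(lra) Hj1 ltac:(lra) HLn Hg Hy HinL Hpt) as HR.
    fold LossF in HR.
    assert (Hlen : length (Lnet j) = S (length nl)) by reflexivity.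
    rewrite Hlen in HR.
    assert (Hnn1 : (1 <= length nl)%nat).
    { destruct nl; simpl in *; [destruct Hs|lia]. }
    assert (HlA : 0 <= logp A) by apply logp_ge0.
    assert (Hale : INR a <= logp A + 2) by (pose proof (log2_A1 A HA); lra).
    assert (Hble : INR b <= log2 (/ eps) + 1) by lra.
    pose proof (final_numeric L M J0 a b (logp A) (log2 (/ eps)) eps (INR N) (LAA g y N - LossF) (length nl)
       HL HM (proj1 He) (pos_INR N) ltac:(unfold J0; lia) HlA ltac:(apply log2_ge0; lra) Hale Hble Hnn1 Hn3 HR) as HF2.
    pose proof (value_ge L M Dc N0 N eps (logp A) HL HM HD (proj1 HN0) HN He) as HV.
    unfold value. fold A. fold C1 in HF2. fold Dc in HF2. lra. }
  match goal with |- _ <= _ + _ * real (Glb_Rbar ?E) =>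
    assert (Hlb : forall r, E r -> (LAA g y N - LossF) / (C1 + 1) <= r);
    [| assert (HE1 : E (value 1)) ] end.
  { intros r (eps & He & ->). pose proof (Hmain eps He).
    apply (Rmult_le_reg_l (C1 + 1)); [lra|]. unfold value in H.
    assert ((C1 + 1) * ((LAA g y N - LossF) / (C1 + 1)) = LAA g y N - LossF) by (field; lra). lra. }
  { exists 1. split; [lra|]. reflexivity. }
  destruct (glb_finite _ _ _ Hlb HE1) as [_ Hge].
  apply (Rmult_le_compat_l (C1 + 1)) in Hge; [|lra].
  assert ((C1 + 1) * ((LAA g y N - LossF) / (C1 + 1)) = LAA g y N - LossF) by (field; lra).
  fold LossF. lra.
Qed.
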